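(* For each integer $g\ge 3$ there exists a nonempty congruence family of genus $g$ hyperelliptic curves over $\mathbb{Q}$ with a rational Weierstrass point $\infty$ such that every curve $C$ in the family has good reduction at $3$ and satisfies $C_{\mathbb{F}_3}(\mathbb{F}_3)=\{\overline{\infty}\}$ and $C_{\mathbb{F}_3}(\mathbb{F}_9)=\{\overline{\infty},(0,\pm\alpha),(1,\pm\alpha),(2,\pm\alpha)\}$ for some $\alpha\in\mathbb{F}_9\setminus\mathbb{F}_3$.
   Context: A genus $g$ hyperelliptic curve over $\mathbb{Q}$ with a marked rational Weierstrass point $\infty$ has a unique minimal affine model $y^2=x^{2g+1}+a_2x^{2g-1}+\dots+a_{2g+1}$ with integer coefficients, separable right-hand side, $\infty$ the point at infinity, and no prime $p$ with $p^{2i}\mid a_i$ for all $i\ge2$. A congruence family is the set of such curves whose minimal-equation coefficients satisfy a given finite set of congruence conditions. $C_{\mathbb{F}_3}$ denotes the reduction mod $3$ of the minimal model, with points written in the affine coordinates $(x,y)$ together with the reduction $\overline{\infty}$ of $\infty$. *)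

(* Defs.v *)
From HB Require Import structures.
From mathcomp Require Import all_boot all_order all_algebra all_field.
Set Implicit Arguments. Unset Strict Implicit. Unset Printing Implicit Defensive.
Import Order.TTheory GRing.Theory Num.Theory.
Local Open Scope ring_scope.

(* A genus g minimal affine model  y^2 = f(x)  is encoded by the integer
   polynomial f = x^(2g+1) + a_2 x^(2g-1) + ... + a_(2g+1). *)

Definition coef_a (g : nat) (f : {poly int}) (i : nat) : int := f`_(2 * g + 1 - i).

Definition poly_Q (f : {poly int}) : {poly rat} := map_poly (fun z : int => z%:~R) f.

(* f is the right-hand side of the (unique) minimal model of a genus g
   hyperelliptic curve over Q with marked rational Weierstrass point at infinity *)
Definition is_min_model (g : nat) (f : {poly int}) : Prop :=
  [/\ f \is monic, size f = (2 * g + 2)%N, f`_(2 * g) = 0,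
      separable_poly (poly_Q f) &
      forall p : nat, prime p ->
        ~ (forall i : nat, (2 <= i <= 2 * g + 1)%N ->
             ((p ^ (2 * i))%:Z %| coef_a g f i)%Z)].

(* A congruence condition (i, m, r) : a_i = r (mod m), with m > 0 and
   2 <= i <= 2g+1. *)
Definition valid_cond (g : nat) (c : nat * int * int) : bool :=
  [&& (2 <= c.1.1 <= 2 * g + 1)%N & (0 < c.1.2)%R].

Definition sat_cond (g : nat) (f : {poly int}) (c : nat * int * int) : bool :=
  (coef_a g f c.1.1 == c.2 %[mod c.1.2])%Z.

Definition in_family (g : nat) (conds : seq (nat * int * int)) (f : {poly int}) : Prop :=
  is_min_model g f /\ all (sat_cond g f) conds.

Definition red (F : nzRingType) (f : {poly int}) : {poly F} :=
  map_poly (fun z : int => z%:~R) f.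

(* good reduction at 3: the reduction mod 3 of the minimal model is smooth,
   i.e. f mod 3 is separable (p = 3 odd, deg f odd so infinity is smooth) *)
Definition good_red3 (f : {poly int}) : Prop := separable_poly (red 'F_3 f).

Definition aff_pt (F : nzRingType) (f : {poly int}) (x y : F) : Prop :=
  y ^+ 2 = (red F f).[x].

(* Main.v *)
Require Import Defs.
From HB Require Import structures.
From mathcomp Require Import all_boot all_order all_algebra all_field.
From mathcomp Require Import ring lra zify.
Import Order.TTheory GRing.Theory Num.Theory.
Local Open Scope ring_scope.

Lemma map_res (aR rR : comNzRingType) (f : {rmorphism aR -> rR}) (p q : {poly aR}) :
    f (lead_coef p) != 0 -> f (lead_coef q) != 0 ->
  f (resultant p q) = resultant (map_poly f p) (map_poly f q).
Proof.
move=> nz_fp nz_fq; rewrite /resultant /Sylvester_mx !size_map_poly_id0 //.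
rewrite -det_map_mx /= map_col_mx; congr (\det (col_mx _ _));
  by apply: map_lin1_mx => v; rewrite map_poly_rV rmorphM /= map_rVpoly.
Qed.

Lemma coprime_res (K : fieldType) (p q : {poly K}) : p != 0 ->
  coprimep p q = (resultant p q != 0).
Proof.
move=> p0; rewrite resultant_eq0 /coprimep -leqNgt.
have : gcdp p q != 0 by rewrite gcdp_eq0 negb_and p0.
rewrite -size_poly_gt0; case: (size _) => [|[|n]] //.
Qed.

Definition qq (H : {poly int}) := H^`() - 'X * H.

Lemma red_qq (K : nzRingType) H : red K (qq H) = (red K H)^`() - 'X * red K H.
Proof. by rewrite /red /qq rmorphB rmorphM /= map_polyX deriv_map. Qed.

Lemma lead_qq H : H \is monic -> lead_coef (qq H) = -1.
Proof.
move=> mH; have H0 : H != 0 by apply: monic_neq0.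
rewrite /qq addrC lead_coefDl.
  by rewrite lead_coefN lead_coefM lead_coefX (eqP mH) mulr1.
rewrite size_opp mulrC size_mulX //.
by apply: (leq_trans (lt_size_deriv H0)).
Qed.

Lemma sep_res (K : fieldType) H : H \is monic ->
  separable_poly (red K H) = ((resultant H (qq H))%:~R != 0 :> K).
Proof.
move=> mH.
have mK : red K H \is monic by apply: monic_map.
rewrite unlock /separable_poly -(coprimep_addl_mul (- 'X)) mulNr addrC -red_qq.
rewrite coprime_res ?monic_neq0 //.
rewrite (@map_res _ _ (intmul 1)) //.
  by rewrite (eqP mH) rmorph1 oner_neq0.
by rewrite lead_qq // rmorphN1 oppr_eq0 oner_neq0.
Qed.

Lemma sep_transfer H : H \is monic -> separable_poly (red 'F_3 H) ->
  separable_poly (poly_Q H).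
Proof.
move=> mH; rewrite !sep_res // => /eqP nz; apply/eqP => e; apply: nz.
move/eqP: e; rewrite intr_eq0 => /eqP ->; by rewrite mulr0z.
Qed.
Definition conds (g : nat) (H : {poly int}) : seq (nat * int * int) :=
  [seq (i, 3%:Z, coef_a g H i) | i <- iota 2 (2 * g)].

Lemma red_eq (F : nzRingType) g (H f : {poly int}) : (3%:R : F) = 0 ->
  H \is monic -> size H = (2*g+2)%N -> H`_(2*g) = 0 -> is_min_model g f ->
  all (sat_cond g f) (conds g H) -> red F f = red F H.
Proof.
move=> h3 mH sH cH [mf sf cf _ _] al.
apply/polyP => i; rewrite !coef_map /=.
have [lt|ge] := ltnP i (2*g).
  move: al; rewrite all_map => /allP /(_ (2*g+1-i)%N).
  rewrite mem_iota /preim /= /sat_cond /coef_a /=.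
  have -> : (2 * g + 1 - (2 * g + 1 - i) = i)%N by lia.
  have Hj : (2 <= 2*g+1-i < 2 + 2*g)%N by lia.
  move=> /(_ Hj).
  rewrite eqz_mod_dvd => /dvdzP [k e].
  have -> : f`_i = H`_i + k * 3 by rewrite -e; ring.
  by rewrite rmorphD rmorphM /= (rmorph_nat _ 3) h3 mulr0 addr0.
move: ge; rewrite leq_eqVlt => /orP [/eqP <-|]; first by rewrite cf cH.
rewrite ltn_neqAle => /andP [ne ge].
move: ne; rewrite eq_sym; have [e|ne ne'] := eqVneq i (2*g+1)%N.
  move=> _; have : lead_coef f = lead_coef H by rewrite (eqP mf) (eqP mH).
  rewrite !lead_coefE sf sH.
  have -> : (2 * g + 2).-1 = i by lia.
  by move=> ->.
have le : (size f <= i)%N.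
  rewrite sf; move: ne ne' ge; clear; move=> /eqP ne /eqP ne' ge; lia.
rewrite !nth_default //; first by rewrite sH -sf.
Qed.

Section Char3.
Variable F : fieldType.
Hypothesis h3 : (3%:R : F) = 0.

Lemma two_neq0 : (2%:R : F) != 0.
Proof.
apply/eqP => h2; have : (1 : F) = 3%:R - 2%:R by ring.
by rewrite h3 h2 subr0 => /eqP; rewrite oner_eq0.
Qed.

Lemma m1_neq1 : (-1 : F) != 1.
Proof.
apply/eqP => e; have : (2%:R : F) = 1 - (-1) by ring.
by rewrite e subrr; apply/eqP; exact: two_neq0.
Qed.

Lemma cube_id (x : F) : x ^+ 3 = x -> x \in [seq (k%:R : F) | k <- iota 0 3].
Proof.
move=> e.
have : x * (x - 1) * (x - 2%:R) = 0.
  have -> : x * (x - 1) * (x - 2%:R) = x ^+ 3 - x - 3%:R * (x ^+ 2 - x) by ring.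
  by rewrite e h3 mul0r subrr subr0.
move/eqP; rewrite !mulf_eq0 !subr_eq0 /= !inE => /orP [/orP [->|->]|->] //; rewrite ?orbT //.
Qed.

Lemma cube_idE (x : F) : x \in [seq (k%:R : F) | k <- iota 0 3] -> x ^+ 3 = x.
Proof.
rewrite /= !inE => /orP [/eqP ->|/orP [/eqP ->|/eqP ->]].
- by rewrite expr0n.
- by rewrite expr1n.
have -> : (2%:R : F) ^+ 3 = 2%:R + 2%:R * 3%:R by ring.
by rewrite h3 mulr0 addr0.
Qed.

Lemma sq_not_m1 (y : F) : y ^+ 3 = y -> y ^+ 2 != -1.
Proof.
move=> e; apply/eqP => e2.
have : y * 2%:R = 0.
  have -> : y * 2%:R = y - y ^+ 2 * y by rewrite e2; ring.
  by rewrite -exprSr e subrr.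
move/eqP; rewrite mulf_eq0 (negPf two_neq0) orbF => /eqP y0.
by move: e2; rewrite y0 expr0n /= => /eqP; rewrite eq_sym oppr_eq0 oner_eq0.
Qed.

Lemma nonsq (y h : F) : y ^+ 9 = y -> h ^+ 4 = -1 -> y ^+ 2 <> h.
Proof.
move=> e9 e4 e2; have e8 : y ^+ 8 = -1 by rewrite -e4 -e2 -exprM.
have [y0|ny0] := eqVneq y 0.
  by move: e8; rewrite y0 expr0n /= => /eqP; rewrite eq_sym oppr_eq0 oner_eq0.
have : y * (y ^+ 8 - 1) = 0 by rewrite mulrBr -exprS e9 mulr1 subrr.
move/eqP; rewrite mulf_eq0 (negPf ny0) /= e8 subr_eq0 => /eqP e.
by move: m1_neq1; rewrite e eqxx.
Qed.

End Char3.

Definition goodval (H : {poly int}) :=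
  forall F : fieldType, (3%:R : F) = 0 -> forall x : F, x ^+ 9 = x ->
     (x ^+ 3 = x -> (red F H).[x] = -1) /\ (x ^+ 3 != x -> ((red F H).[x]) ^+ 4 = -1).

Lemma F3_char : (3%:R : 'F_3) = 0.
Proof. exact: pchar_Fp_0. Qed.

Lemma F3_cube (x : 'F_3) : x ^+ 3 = x.
Proof. by rewrite -{2}(expf_card x) card_Fp. Qed.

Lemma F9_facts (F : finFieldType) : #|F| = 9%N ->
  (3%:R : F) = 0 /\ forall x : F, x ^+ 9 = x.
Proof.
move=> c; split; last by move=> x; rewrite -{2}(expf_card x) c.
by apply: pcharf0; apply: (@card_finPcharP _ 3 2).
Qed.

Lemma F9_sqrt (F : finFieldType) : #|F| = 9%N -> exists a : F, a ^+ 2 = -1.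
Proof.
move=> c; have [h3 h9] := F9_facts _ c.
have [/existsP [a /eqP ea]|nex] := boolP [exists a : F, a ^+ 2 == -1].
  by exists a.
have sub : forall z : F, z \in [:: 0; 1; -1].
  move=> z; rewrite !inE.
  have [->|nz] := eqVneq z 0; first by [].
  have e8 : z ^+ 8 = 1.
    apply: (mulfI nz); rewrite -exprS h9 mulr1 //.
  have : (z ^+ 2 - 1) * (z ^+ 2 + 1) * (z ^+ 4 + 1) = 0.
    have -> : (z ^+ 2 - 1) * (z ^+ 2 + 1) * (z ^+ 4 + 1) = z ^+ 8 - 1 by ring.
    by rewrite e8 subrr.
  have nx : forall a : F, a ^+ 2 + 1 != 0.
    move=> a; apply/negP => /eqP ea; move/negP: nex; apply; apply/existsP; exists a.
    by rewrite -(subr0 (a ^+ 2)) -ea; apply/eqP; ring.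
  have e4 : z ^+ 4 = (z ^+ 2) ^+ 2 by rewrite -exprM.
  move/eqP; rewrite !mulf_eq0 (negPf (nx z)) e4 (negPf (nx (z ^+ 2))) !orbF.
  have -> : z ^+ 2 - 1 = (z - 1) * (z + 1) by ring.
  rewrite mulf_eq0 subr_eq0 addr_eq0 => /orP [->|->]; by rewrite ?orbT.
have : (#|F| <= 3)%N.
  apply: (leq_trans _ (card_size [:: 0; 1; -1])).
  by apply: subset_leq_card; apply/subsetP => z _; exact: sub z.
by rewrite c.
Qed.

Theorem generic (g : nat) (H : {poly int}) (hg : (3 <= g)%N) :
  H \is monic -> size H = (2*g+2)%N -> H`_(2*g) = 0 -> H`_0 = -1 ->
  separable_poly (red 'F_3 H) -> goodval H ->
  exists conds : seq (nat * int * int),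
    all (valid_cond g) conds /\
    (exists f : {poly int}, in_family g conds f) /\
    forall f : {poly int}, in_family g conds f ->
      [/\ good_red3 f,
          (forall x y : 'F_3, ~ aff_pt f x y) &
          forall F : finFieldType, #|F| = 9%N ->
            exists alpha : F,
              alpha \notin [seq (k%:R : F) | k <- iota 0 3] /\
              forall x y : F, aff_pt f x y <->
                (x \in [seq (k%:R : F) | k <- iota 0 3] /\ (y = alpha \/ y = - alpha))].
Proof.
move=> mH sH cH c0 sep gv.
exists (conds g H); split.
  rewrite all_map; apply/allP => i; rewrite mem_iota /preim /valid_cond /= => hi.
  by apply/andP; split => //; lia.
split.
  exists H; split.
    split => //; first exact: sep_transfer.
    move=> p pp /(_ (2*g+1)%N).
    have hi : (2 <= 2 * g + 1 <= 2 * g + 1)%N by lia.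
    move=> /(_ hi); rewrite /coef_a subnn c0 dvdzE /= dvdn1 => /eqP e.
    have : (1 < p ^ (2 * (2 * g + 1)))%N.
      by rewrite -{1}(expn0 p) ltn_exp2l ?prime_gt1 //; lia.
    by rewrite e.
  by rewrite all_map; apply/allP => i _; rewrite /preim /sat_cond /=.
move=> f [mf al].
have eF : forall F : nzRingType, (3%:R : F) = 0 -> red F f = red F H.
  by move=> F h3; exact: (@red_eq F g H f h3 mH sH cH mf al).
split.
- by rewrite /good_red3 eF //; exact: F3_char.
- move=> x y; rewrite /aff_pt eF; last exact: F3_char.
  have h9 : x ^+ 9 = x by rewrite (exprM x 3 3) !F3_cube.
  rewrite ((gv _ F3_char x h9).1 (F3_cube x)) => e.
  by move: (sq_not_m1 _ F3_char _ (F3_cube y)); rewrite e eqxx.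
move=> F cF; have [h3 h9] := F9_facts _ cF.
have [a ea] := F9_sqrt _ cF.
exists a; split.
  apply/negP => /(cube_idE _ h3 _) a3.
  by move: (sq_not_m1 _ h3 _ a3); rewrite ea eqxx.
move=> x y; rewrite /aff_pt eF //.
have [x3|nx3] := eqVneq (x ^+ 3) x.
  rewrite ((gv _ h3 x (h9 x)).1 x3); split.
    move=> e; split; first exact: cube_id _ h3 _ x3.
    have : (y - a) * (y + a) = 0.
      have -> : (y - a) * (y + a) = y ^+ 2 - a ^+ 2 by ring.
      by rewrite e ea subrr.
    move/eqP; rewrite mulf_eq0 subr_eq0 addr_eq0 => /orP [/eqP ->|/eqP ->]; by [left|right].
  by move=> [_ [->|->]]; rewrite ?sqrrN ea.
split.
  move=> e; exfalso; apply: (nonsq _ h3 _ _ (h9 y) _ e).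
  exact: (gv _ h3 x (h9 x)).2.
move=> [/(cube_idE _ h3 _) x3 _]; by move: nx3; rewrite x3 eqxx.
Qed.

Lemma deriv1 (R : nzRingType) : (1 : {poly R})^`() = 0.
Proof. by rewrite -polyC1 derivC. Qed.

Lemma Xn_facts n (R : {poly int}) : (forall j, (n <= j)%N -> R`_j = 0) ->
  ('X^n + R) \is monic /\ size ('X^n + R) = n.+1.
Proof.
move=> hR; have sR : (size R <= n)%N by apply/leq_sizeP.
have lt : (size R < size ('X^n : {poly int}))%N by rewrite size_polyXn.
split; last by rewrite size_addl // size_polyXn.
by rewrite monicE lead_coefDl // lead_coefXn.
Qed.

Lemma mulrn_mod3 (R : pzRingType) (h : (3%:R : R) = 0) (a : R) k r :
  (k %% 3 = r)%N -> a *+ k = a *+ r.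
Proof.
move=> <-; rewrite {1}(divn_eq k 3) mulrnDr mulrnA -mulr_natr h mulr0.
by rewrite add0r.
Qed.

Lemma F3P_char : (3%:R : {poly 'F_3}) = 0.
Proof. by rewrite -polyC_natr F3_char. Qed.

Lemma sep_mono (p : {poly 'F_3}) (k : nat) (c : 'F_3) : c != 0 -> p.[0] != 0 ->
  p^`() = c%:P * 'X^k -> separable_poly p.
Proof.
move=> c0 p0 e; rewrite unlock /separable_poly e coprimepMr; apply/andP; split.
  apply/Bezout_eq1_coprimepP; exists (0, c^-1%:P) => /=.
  by rewrite mul0r add0r -polyCM mulVf.
apply: coprimep_expr.
have -> : ('X : {poly 'F_3}) = 'X - 0%:P by rewrite subr0.
by rewrite coprimep_XsubC.
Qed.

Lemma s_zero (F : fieldType) (x : F) : x ^+ 9 = x -> x ^+ 3 != x ->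
  x ^+ 6 + x ^+ 4 + x ^+ 2 + 1 = 0.
Proof.
move=> h9 nx; have : (x ^+ 3 - x) * (x ^+ 6 + x ^+ 4 + x ^+ 2 + 1) = 0.
  have -> : (x ^+ 3 - x) * (x ^+ 6 + x ^+ 4 + x ^+ 2 + 1) = x ^+ 9 - x by ring.
  by rewrite h9 subrr.
by move/eqP; rewrite mulf_eq0 subr_eq0 (negPf nx) /= => /eqP.
Qed.

Lemma val_main (F : fieldType) (h3 : (3%:R : F) = 0) (x : F) : x ^+ 9 = x ->
  x ^+ 3 != x -> (x ^+ 3 - x - 1) ^+ 4 = -1.
Proof.
move=> h9 nx; have s0 := s_zero _ _ h9 nx.
have -> : (x ^+ 3 - x - 1) ^+ 4 = (x ^+ 6 + x ^+ 4 + x ^+ 2 + 1) *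
   ((x ^+ 3 - x) ^+ 2 - 4%:R * (x ^+ 3 - x) + 5%:R)
   + 3%:R * ( - x ^+ 4 * ((x ^+ 3 - x) ^+ 2 - 4%:R * (x ^+ 3 - x) + 5%:R) - 1) - 1.
  by ring.
by rewrite s0 h3 !mul0r add0r sub0r.
Qed.

Lemma goodval_main (H : {poly int}) :
  (forall F : fieldType, (3%:R : F) = 0 -> forall x : F, x ^+ 9 = x ->
     (red F H).[x] = x ^+ 3 - x - 1) -> goodval H.
Proof.
move=> hv F h3 x h9; rewrite (hv F h3 x h9); split => [x3|nx3].
  by rewrite x3 subrr sub0r.
exact: val_main.
Qed.

Definition H3 : {poly int} := 'X^7 - 'X^5 - 1.

Lemma H3_facts : [/\ H3 \is monic, size H3 = (2*3+2)%N, H3`_(2*3) = 0 & H3`_0 = -1].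
Proof.
have e : H3 = 'X^7 + (- 'X^5 - 1) by rewrite /H3; ring.
have [m s] : H3 \is monic /\ size H3 = 8%N.
  rewrite e; apply: Xn_facts => j hj.
  rewrite coefB coefN coefXn coef1.
  have -> : (j == 5)%N = false by apply/eqP; lia.
  have -> : (j == 0)%N = false by apply/eqP; lia.
  by rewrite /= oppr0 subr0.
split => //; rewrite /H3 !coefB !coefXn coef1 //.
Qed.

Lemma H3_sep : separable_poly (red 'F_3 H3).
Proof.
rewrite unlock /separable_poly /red /H3 !rmorphB /= !map_polyXn rmorph1.
rewrite !derivB !derivXn deriv1 /=.
apply/Bezout_eq1_coprimepP.
exists ((- 1 - 'X^4 + 'X^5), (- 1 + 'X^2 + 'X^3 - 'X^4 + 'X^5 - 'X^6)) => /=.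
transitivity (1 + 3%:R * (2%:R * 'X^4 - 4%:R * 'X^6 - 2%:R * 'X^7 + 4%:R * 'X^8
   + 'X^9 - 'X^10 + 2%:R * 'X^11 - 2%:R * 'X^12) : {poly 'F_3}); first by ring.
by rewrite F3P_char mul0r addr0.
Qed.

Lemma H3_good : goodval H3.
Proof.
move=> F h3 x h9.
have -> : (red F H3).[x] = x ^+ 7 - x ^+ 5 - 1.
  by rewrite /red /H3 !rmorphB /= !map_polyXn rmorph1 !hornerE.
split => [x3|nx3].
  have -> : x ^+ 7 - x ^+ 5 - 1 = (x ^+ 3 - x) * x ^+ 4 - 1 by ring.
  by rewrite x3 subrr mul0r sub0r.
have s0 := s_zero _ _ h9 nx3.
have -> : (x ^+ 7 - x ^+ 5 - 1) ^+ 4 = (x ^+ 6 + x ^+ 4 + x ^+ 2 + 1) *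
  (- 4%:R * 1 + 12%:R * x + 4%:R * x ^+ 2 - 24%:R * x ^+ 3 + 12%:R * x ^+ 4 + 16%:R * x ^+ 5 - 12%:R * x ^+ 6 - 8%:R * x ^+ 7 - 4%:R * x ^+ 8 + 16%:R * x ^+ 9 + 10%:R * x ^+ 10 - 24%:R * x ^+ 11 - 6%:R * x ^+ 12 + 16%:R * x ^+ 13 + 6%:R * x ^+ 14 - 4%:R * x ^+ 15 - 10%:R * x ^+ 16 + 10%:R * x ^+ 18 - 5%:R * x ^+ 20 + x ^+ 22)
  + 3%:R * (2%:R * 1 - 4%:R * x + 4%:R * x ^+ 3 - 4%:R * x ^+ 4) - 1 by ring.
by rewrite s0 h3 !mul0r add0r sub0r.
Qed.

Lemma red_at0 (F : nzRingType) (H : {poly int}) : (red F H).[0] = (H`_0)%:~R.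
Proof. by rewrite horner_coef0 coef_map. Qed.

Lemma sep_from_deriv (H : {poly int}) k (c : 'F_3) : H`_0 = -1 -> c != 0 ->
  (red 'F_3 H)^`() = c%:P * 'X^k -> separable_poly (red 'F_3 H).
Proof.
move=> h0 c0 e; apply: (@sep_mono _ k c c0 _ e).
by rewrite red_at0 h0 rmorphN1 oppr_eq0 oner_eq0.
Qed.

Lemma red9 (F : fieldType) (x : F) : x ^+ 9 = x -> forall k, (9 <= k)%N -> x ^+ k = x ^+ (k - 8).
Proof.
move=> h9 k hk; rewrite -(subnK hk) exprD h9 -exprSr; congr (_ ^+ _); lia.
Qed.

Definition H4 : {poly int} := 'X^9 + 'X^3 + 'X - 1.

Lemma H4_facts : [/\ H4 \is monic, size H4 = (2*4+2)%N, H4`_(2*4) = 0 & H4`_0 = -1].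
Proof.
have e : H4 = 'X^9 + ('X^3 + 'X - 1) by rewrite /H4; ring.
have [m s] : H4 \is monic /\ size H4 = 10%N.
  rewrite e; apply: Xn_facts => j hj.
  rewrite coefB coefD coefXn coefX coef1.
  have -> : (j == 3)%N = false by apply/eqP; lia.
  have -> : (j == 1)%N = false by apply/eqP; lia.
  have -> : (j == 0)%N = false by apply/eqP; lia.
  by rewrite /= subr0 addr0.
split => //; rewrite /H4 !coefB !coefD !coefXn coefX coef1 //.
Qed.

Lemma H4_sep : separable_poly (red 'F_3 H4).
Proof.
rewrite unlock /separable_poly /red /H4 !rmorphB !rmorphD /= !map_polyXn map_polyX rmorph1.
rewrite !derivB !derivD !derivXn derivX deriv1 /=.
apply/Bezout_eq1_coprimepP.
exists (0, 1) => /=.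
transitivity (1 + 3%:R * (3%:R * 'X^8 + 'X^2) : {poly 'F_3}); first by ring.
by rewrite F3P_char mul0r addr0.
Qed.

Lemma H4_good : goodval H4.
Proof.
apply: goodval_main => F h3 x h9.
rewrite /red /H4 !rmorphB !rmorphD /= !map_polyXn map_polyX rmorph1 !hornerE h9.
have -> : x + x ^+ 3 + x - 1 = x ^+ 3 - x - 1 + 3%:R * x by ring.
by rewrite h3 mul0r addr0.
Qed.

Definition H6 : {poly int} := 'X^13 - 'X^7 - 1.

Lemma H6_facts : [/\ H6 \is monic, size H6 = (2*6+2)%N, H6`_(2*6) = 0 & H6`_0 = -1].
Proof.
have e : H6 = 'X^13 + (- 'X^7 - 1) by rewrite /H6; ring.
have [m s] : H6 \is monic /\ size H6 = 14%N.
  rewrite e; apply: Xn_facts => j hj.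
  rewrite coefB coefN coefXn coef1.
  have -> : (j == 7)%N = false by apply/eqP; lia.
  have -> : (j == 0)%N = false by apply/eqP; lia.
  by rewrite /= oppr0 subr0.
split => //; rewrite /H6 !coefB !coefXn coef1 //.
Qed.

Lemma H6_sep : separable_poly (red 'F_3 H6).
Proof.
rewrite unlock /separable_poly /red /H6 !rmorphB /= !map_polyXn rmorph1.
rewrite !derivB !derivXn deriv1 /=.
apply/Bezout_eq1_coprimepP.
exists (-1, 'X) => /=.
transitivity (1 + 3%:R * (- 2%:R * 'X^7 + 4%:R * 'X^13) : {poly 'F_3}); first by ring.
by rewrite F3P_char mul0r addr0.
Qed.

Lemma H6_good : goodval H6.
Proof.
move=> F h3 x h9.
have -> : (red F H6).[x] = x ^+ 5 - x ^+ 7 - 1.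
  rewrite /red /H6 !rmorphB /= !map_polyXn rmorph1 !hornerE.
  by rewrite (red9 _ _ h9 13).

split => [x3|nx3].
  have -> : x ^+ 5 - x ^+ 7 - 1 = - ((x ^+ 3 - x) * x ^+ 4) - 1 by ring.
  by rewrite x3 subrr mul0r oppr0 sub0r.
have s0 := s_zero _ _ h9 nx3.
have -> : (x ^+ 5 - x ^+ 7 - 1) ^+ 4 = (x ^+ 6 + x ^+ 4 + x ^+ 2 + 1) *
  (- 4%:R * 1 - 12%:R * x + 4%:R * x ^+ 2 + 24%:R * x ^+ 3 + 12%:R * x ^+ 4 - 16%:R * x ^+ 5 - 12%:R * x ^+ 6 + 8%:R * x ^+ 7 - 4%:R * x ^+ 8 - 16%:R * x ^+ 9 + 10%:R * x ^+ 10 + 24%:R * x ^+ 11 - 6%:R * x ^+ 12 - 16%:R * x ^+ 13 + 6%:R * x ^+ 14 + 4%:R * x ^+ 15 - 10%:R * x ^+ 16 + 10%:R * x ^+ 18 - 5%:R * x ^+ 20 + x ^+ 22)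
  + 3%:R * (2%:R * 1 + 4%:R * x - 4%:R * x ^+ 3 - 4%:R * x ^+ 4) - 1 by ring.
by rewrite s0 h3 !mul0r add0r sub0r.
Qed.

Definition Hg (g a : nat) : {poly int} := 'X^(2*g+1) - 'X^a - 'X^9 + 'X^3 - 1.

Lemma Hg_facts g a : (5 <= g)%N -> (0 < a < 2 * g)%N ->
  [/\ Hg g a \is monic, size (Hg g a) = (2*g+2)%N, (Hg g a)`_(2*g) = 0 & (Hg g a)`_0 = -1].
Proof.
move=> g5 ha.
set R : {poly int} := - 'X^a - 'X^9 + 'X^3 - 1.
have e : Hg g a = 'X^(2*g+1) + R by rewrite /Hg /R; ring.
have hR : forall j, (2 * g <= j)%N -> R`_j = 0.
  move=> j hj; rewrite /R !(coefB, coefD, coefN, coefXn) coef1.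
  have -> : (j == a)%N = false by apply/eqP; lia.
  have -> : (j == 9)%N = false by apply/eqP; lia.
  have -> : (j == 3)%N = false by apply/eqP; lia.
  have -> : (j == 0)%N = false by apply/eqP; lia.
  by rewrite /= oppr0 !subr0.
have [m s] : Hg g a \is monic /\ size (Hg g a) = (2*g+1).+1.
  by rewrite e; apply: Xn_facts => j hj; apply: hR; lia.
have sz : size (Hg g a) = (2*g+2)%N by rewrite s; lia.
have c2 : (Hg g a)`_(2*g) = 0.
  rewrite e coefD hR // coefXn.
  have -> : (2 * g == 2 * g + 1)%N = false by apply/eqP; lia.
  by rewrite addr0.
split => //.
rewrite e /R !(coefB, coefD, coefN, coefXn) coef1.
have -> : (0 == 2 * g + 1)%N = false by apply/eqP; lia.
have -> : (0 == a)%N = false by apply/eqP; lia.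
by rewrite /= oppr0 !subr0 add0r.
Qed.

Lemma Hg_deriv g a : (5 <= g)%N -> (0 < a)%N ->
  (red 'F_3 (Hg g a))^`() = 'X^(2*g) *+ ((2*g+1) %% 3) - 'X^(a.-1) *+ (a %% 3).
Proof.
move=> g5 ha.
rewrite /red /Hg !(rmorphB, rmorphD, rmorphN) /= !map_polyXn rmorph1.
rewrite !(derivB, derivD, derivN, derivXn) deriv1 /=.
rewrite (@mulrn_mod3 _ F3P_char _ (2*g+1) ((2*g+1) %% 3)) //.
rewrite (@mulrn_mod3 _ F3P_char _ a (a %% 3)) //.
rewrite (@mulrn_mod3 _ F3P_char _ 9 0) //.
rewrite (@mulrn_mod3 _ F3P_char _ 3 0) //.
have -> : (2 * g + 1).-1 = (2 * g)%N by lia.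
by rewrite !mulr0n subr0 addr0 subr0.
Qed.

Lemma Hg_val g a : (5 <= g)%N -> (2*g+1 - 8 = a \/ 2*g+1 - 16 = a /\ 8 <= g)%N ->
  (a + 8 <= 2 * g + 1)%N -> goodval (Hg g a).
Proof.
move=> g5 ea ha; apply: goodval_main => F h3 x h9.
rewrite /red /Hg !(rmorphB, rmorphD, rmorphN) /= !map_polyXn rmorph1 !hornerE h9.
have -> : x ^+ (2 * g + 1) = x ^+ a.
  rewrite (red9 _ _ h9 (2*g+1)); last lia.
  case: ea => [-> //|[e g8]].
  by rewrite (red9 _ _ h9 (2*g+1-8)); [congr (_ ^+ _); lia|lia].
by rewrite subrr sub0r; ring.
Qed.

Theorem lemma6p5 (g : nat) (hg : (3 <= g)%N) :
  exists conds : seq (nat * int * int),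
    all (valid_cond g) conds /\
    (exists f : {poly int}, in_family g conds f) /\
    forall f : {poly int}, in_family g conds f ->
      [/\ good_red3 f,
          (* C_{F_3}(F_3) = {infinity}: no affine F_3-points *)
          (forall x y : 'F_3, ~ aff_pt f x y) &
          (* C_{F_3}(F_9) = {infinity, (0,+-a), (1,+-a), (2,+-a)}, a in F_9 \ F_3 *)
          forall F : finFieldType, #|F| = 9%N ->
            exists alpha : F,
              alpha \notin [seq (k%:R : F) | k <- iota 0 3] /\
              forall x y : F, aff_pt f x y <->
                (x \in [seq (k%:R : F) | k <- iota 0 3] /\ (y = alpha \/ y = - alpha))].
Proof.
have [e3|n3] := eqVneq g 3.
  subst g; have [a b c d] := H3_facts; exact: (@generic 3 H3 hg a b c d H3_sep H3_good).
have [e4|n4] := eqVneq g 4.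
  subst g; have [a b c d] := H4_facts; exact: (@generic 4 H4 hg a b c d H4_sep H4_good).
have [e6|n6] := eqVneq g 6.
  subst g; have [a b c d] := H6_facts; exact: (@generic 6 H6 hg a b c d H6_sep H6_good).
have g5 : (5 <= g)%N by move: n3 n4 => /eqP n3 /eqP n4; lia.
have [m1|m1] := eqVneq ((2*g+1) %% 3)%N 1%N.
  have g9 : (9 <= g)%N by move: n6 => /eqP n6; lia.
  set a := (2 * g + 1 - 16)%N.
  have ha : (0 < a < 2 * g)%N by rewrite /a; lia.
  have [mm sm cm zm] := Hg_facts g a g5 ha.
  apply: (@generic g (Hg g a) hg mm sm cm zm).
    apply: (@sep_from_deriv _ (2 * g) 1 zm (oner_neq0 _)).
    rewrite Hg_deriv //; last by rewrite /a; lia.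
    have -> : (a %% 3 = 0)%N by rewrite /a; lia.
    by rewrite m1 mulr0n subr0 polyC1 mul1r.
  by apply: Hg_val => //; rewrite /a; lia.
set a := (2 * g + 1 - 8)%N.
have ha : (0 < a < 2 * g)%N by rewrite /a; lia.
have [mm sm cm zm] := Hg_facts g a g5 ha.
apply: (@generic g (Hg g a) hg mm sm cm zm); last by apply: Hg_val => //; rewrite /a; lia.
have [m0|m2] : ((2*g+1) %% 3 = 0 \/ (2*g+1) %% 3 = 2)%N by move: m1 => /eqP m1; lia.
  apply: (@sep_from_deriv _ a.-1 (-1) zm); first by rewrite oppr_eq0 oner_neq0.
  rewrite Hg_deriv //; last by rewrite /a; lia.
  have -> : (a %% 3 = 1)%N by rewrite /a; lia.
  by rewrite m0 mulr0n sub0r mulr1n polyCN polyC1 mulN1r.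
apply: (@sep_from_deriv _ (2 * g) (-1) zm); first by rewrite oppr_eq0 oner_neq0.
rewrite Hg_deriv //; last by rewrite /a; lia.
have -> : (a %% 3 = 0)%N by rewrite /a; lia.
rewrite m2 mulr0n subr0 polyCN polyC1 mulN1r.
have -> : ('X^(2 * g) *+ 2 : {poly 'F_3}) = - 'X^(2 * g) + 'X^(2*g) * 3%:R by ring.
by rewrite F3P_char mulr0 addr0.
Qed.
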